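(* Assume the setting and Assumptions A1 and A2 described in the context. Then for every $\beta\in[0,1/2)$, \[ \sum_{k\ge1}k^{-1/2}D_\beta(\theta_k,\theta_{k-1})V^\beta(X_k)<\infty\qquad\mathbb P\text{-a.s.} \]
   Context: Setting: $(\mathsf X,\mathcal X)$ is a measurable space with countably generated $\sigma$-field, $(\Theta,\mathcal T)$ a measurable space, $\pi$ a probability measure on $(\mathsf X,\mathcal X)$, and $\{P_\theta,\theta\in\Theta\}$ a family of Markov transition kernels on $\mathsf X$ such that $\theta\mapsto P_\theta(x,A)$ is measurable for every $(x,A)$ and each $P_\theta$ admits $\pi$ as invariant distribution. Let $\bar\mu$ be a probability measure on $\mathsf X\times\Theta$ and $\{(X_n,\theta_n),n\ge0\}$ a process with law $\mathbb P$ (expectation $\mathbb E$) and natural filtration $\mathcal F_n$, such that $(X_0,\theta_0)\sim\bar\mu$ and for every $n\ge0$ and nonnegative measurable $f$, $\mathbb E(f(X_{n+1})\mid\mathcal F_n)=P_{\theta_n}f(X_n)$ a.s. Notation: $Qf(x)=\int Q(x,dy)f(y)$; for $W:\mathsf X\to[1,\infty)$, $|f|_W=\sup_{\mathsf X}|f|/W$, and $\|\mu\|_W=\sup_{|g|_W\le1}|\mu(g)|$. For $\beta\in[0,1]$, $D_\beta(\theta,\theta')=\sup_{|f|_{V^\beta}\le1}\sup_{x}|P_\theta f(x)-P_{\theta'}f(x)|/V^\beta(x)$. Assumption A1: each $P_\theta$ is phi-irreducible and aperiodic with invariant distribution $\pi$; there is a measurable $V:\mathsf X\to[1,\infty)$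 with $\int V(x)\bar\mu(dx,d\theta)<\infty$ such that for every $\beta\in(0,1]$ there exist $\rho\in(0,1)$, $C<\infty$ with $\|P_\theta^n(x,\cdot)-\pi\|_{V^\beta}\le C\rho^nV^\beta(x)$ for all $(x,\theta)$, $n\ge0$; and there exist $b<\infty$, $\lambda\in(0,1)$ with $P_\theta V(x)\le\lambda V(x)+b$ for all $(x,\theta)$. Assumption A2: there exist $\eta\in[0,1/2)$ and a nonincreasing sequence of positive numbers $\{\gamma_n,n\ge1\}$ with $\gamma_n=O(n^{-\alpha})$ for some $\alpha>1/2$, such that for every $\beta\in[0,1]$ there is a finite constant $C$ with $D_\beta(\theta_{n-1},\theta_n)\le C\gamma_nV^\eta(X_n)$ $\mathbb P$-a.s. for all $n\ge1$. *)

(* Defs.v *)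
From HB Require Import structures.
From mathcomp Require Import all_boot all_order all_algebra.
From mathcomp Require Import all_classical all_reals all_analysis.
From mathcomp Require Import measurable_realfun.
Set Implicit Arguments. Unset Strict Implicit. Unset Printing Implicit Defensive.
Import Order.TTheory GRing.Theory Num.Theory.
Import numFieldNormedType.Exports.
Local Open Scope classical_set_scope.
Local Open Scope ring_scope.

Section Defs.
Context {R : realType}.

Definition countably_generated d (X : measurableType d) : Prop :=
  exists G : nat -> set X, (@measurable d X) = <<s range G >>.

Definition kiter d (X : measurableType d) (K : X -> probability X R)
  (n : nat) (g : X -> \bar R) : X -> \bar R :=
  iter n (fun h x => (\int[K x]_y h y)%E) g.

Definition phi_irreducible d (X : measurableType d) (K : X -> probability X R)
  : Prop :=
  exists phi : {measure set X -> \bar R},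
    sigma_finite setT phi /\ (0 < phi setT)%E /\
    forall A, measurable A -> (0 < phi A)%E -> forall x,
      exists n, (0 < n)%N /\ (0 < kiter K n (fun y => (\1_A y)%:E) x)%E.

(* aperiodicity (Roberts-Rosenthal style, relative to the invariant pi):
   there is no d >= 2 and disjoint measurable sets D_0,...,D_{d-1} with
   P(x, D_{i+1 mod d}) = 1 for x in D_i and pi(D_0) > 0 *)
Definition aperiodic d (X : measurableType d) (K : X -> probability X R)
  (pi : probability X R) : Prop :=
  ~ exists (p : nat) (D : nat -> set X),
      [/\ (2 <= p)%N,
          (forall i, (i < p)%N -> measurable (D i)),
          (forall i j, (i < j < p)%N -> D i `&` D j = set0),
          (forall i x, (i < p)%N -> D i x -> K x (D ((i.+1) %% p)%N) = 1%E)
        & (0 < pi (D 0%N))%E].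

Definition Dbeta d (X : measurableType d) (Theta : Type)
  (P : Theta -> X -> probability X R) (V : X -> R) (beta : R)
  (th th' : Theta) : \bar R :=
  ereal_sup [set e | exists (f : X -> R) (x : X),
     [/\ measurable_fun setT f,
         (forall y, `|f y| <= V y `^ beta)
       & e = (`| \int[P th x]_y (f y)%:E - \int[P th' x]_y (f y)%:E |
              * ((V x `^ beta)^-1)%:E)%E]].

Definition nat_filtration dO dX dT (Omega : measurableType dO)
  (X : measurableType dX) (Theta : measurableType dT)
  (Xs : nat -> Omega -> X) (ths : nat -> Omega -> Theta) (n : nat)
  : set (set Omega) :=
  <<s [set B | exists k, (k <= n)%N /\
        ((exists A : set X, measurable A /\ B = Xs k @^-1` A) \/
         (exists A : set Theta, measurable A /\ B = ths k @^-1` A))] >>.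

End Defs.

(* Main.v *)
Require Import Defs.
From HB Require Import structures.
From mathcomp Require Import all_boot all_order all_algebra.
From mathcomp Require Import all_classical all_reals all_analysis.
From mathcomp Require Import measurable_realfun.
Import Order.TTheory GRing.Theory Num.Theory.
Import numFieldNormedType.Exports.
Local Open Scope classical_set_scope.
From mathcomp Require Import ring lra.
Local Open Scope ring_scope.

Lemma pow_tel (R : realType) (s x : R) : 0 < s -> 1 <= x ->
  s * (x + 1) `^ (- (1 + s)) <= x `^ (- s) - (x + 1) `^ (- s).
Proof.
move=> s0 x1.
have x0 : 0 < x by lra.
have x10 : 0 < x + 1 by lra.
rewrite /powR (gt_eqF x0) (gt_eqF x10).
set L := ln x; set M := ln (x + 1).
have LM : L <= M - (x + 1)^-1.
  have hx : x = (x + 1) * (1 + (- (x + 1)^-1)) by field; rewrite gt_eqF.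
  have h1 : 0 < 1 + (- (x + 1)^-1) by rewrite subr_gt0 invf_lt1 //; lra.
  rewrite /L {1}hx lnM ?posrE // -/M lerD2l; apply: le_ln1Dx.
  rewrite ltrN2 invf_lt1 //; lra.
have e0 : 0 < expR (- s * M) by apply: expR_gt0.
have E1 : expR (- (1 + s) * M) = expR (- s * M) * (x + 1)^-1.
  rewrite -[in RHS](lnK (x := x + 1)) ?posrE // -expRN -expRD; congr expR.
  rewrite /M; ring.
have E2 : expR (- s * L) = expR (- s * M) * expR (s * (M - L)).
  rewrite -expRD; congr expR; ring.
have E3 : 1 + s * (M - L) <= expR (s * (M - L)) by apply: expR_ge1Dx.
have E4 : s * (x + 1)^-1 <= s * (M - L) by rewrite ler_pM2l //; lra.
rewrite E1 E2.
have : expR (- s * M) * (s * (x + 1)^-1) <= expR (- s * M) * (expR (s * (M - L)) - 1).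
  rewrite ler_pM2l //; lra.
move=> H; rewrite mulrCA; lra.
Qed.

Lemma pseries_fin (R : realType) (a : nat -> R) (s K : R) (N : nat) :
  0 < s -> 0 <= K -> (forall k, 0 <= a k) -> (1 <= N)%N ->
  (forall k, (N <= k)%N -> a k.+1 <= K * (k.+1%:R) `^ (-(1+s))) ->
  (\sum_(k <oo) (a k)%:E < +oo)%E.
Proof.
move=> s0 K0 a0 N1 aK.
pose S n := \sum_(0 <= k < n) a k.
have Sinc : forall m n, (m <= n)%N -> S m <= S n.
  move=> m n mn; rewrite /S (big_cat_nat (leq0n m) mn) /= lerDl.
  by apply: sumr_ge0 => i _.
have Ind : forall n, S (N.+1 + n)%N <= S N.+1 + K / s * (N%:R `^ (- s) - (N + n)%N%:R `^ (- s)).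
  elim=> [|n IH].
    by rewrite !addn0 subrr mulr0 addr0.
  rewrite addnS /S big_nat_recr //= -/(S _).
  have h1 := aK (N + n)%N (leq_addr _ _).
  have h2 := @pow_tel R s ((N + n)%N%:R) s0.
  have hx : 1 <= (N + n)%:R :> R by rewrite ler1n; apply: leq_trans N1 (leq_addr _ _).
  have h3 := h2 hx.
  have h4 : a (N + n).+1 <= K / s * ((N + n)%:R `^ (- s) - ((N + n)%:R + 1) `^ (- s)).
    apply: (le_trans h1); rewrite -natr1 -mulrA ler_wpM2l //.
    by rewrite ler_pdivlMl // .
  rewrite addnS -natr1.
  have -> : (N.+1 + n)%N = (N + n).+1 by rewrite addSn.
  rewrite addSn in IH; rewrite -/(S N.+1); lra.
have Npos : 0 <= N%:R `^ (- s) :> R by apply: powR_ge0.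
pose B := S N.+1 + K / s * N%:R `^ (- s).
have SB : forall n, S n <= B.
  move=> n; case: (leqP n N.+1) => hn.
    rewrite /B (le_trans (Sinc _ _ hn)) // lerDl mulr_ge0 // divr_ge0 //; lra.
  have -> : n = (N.+1 + (n - N.+1))%N by rewrite subnKC // ltnW.
  apply: (le_trans (Ind _)); rewrite /B lerD2l ler_wpM2l ?divr_ge0 //; try lra.
  by rewrite gerBl powR_ge0.
apply: (@le_lt_trans _ _ B%:E); last by rewrite ltey.
apply: lime_le; first by apply: is_cvg_nneseries => n _ _; rewrite lee_fin.
near=> n; rewrite sumEFin lee_fin; exact: SB.
Unshelve. all: by end_near.
Qed.

Lemma le_integral_nm d (T : measurableType d) (R : realType)
  (mu : {measure set T -> \bar R}) (f g : T -> \bar R) :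
  (forall x, 0 <= f x)%E -> (forall x, f x <= g x)%E ->
  (\int[mu]_x f x <= \int[mu]_x g x)%E.
Proof.
move=> f0 fg.
have g0 : forall x, (0 <= g x)%E by move=> x; exact: le_trans (f0 x) (fg x).
rewrite !ge0_integralTE //; apply: ereal_sup_le => _ [h hf <-].
by exists h => // x; exact: le_trans (hf x) (fg x).
Qed.

Lemma abseBC (R : realType) (x y : \bar R) : (`|x - y| = `|y - x|)%E.
Proof. by case: x => [x||]; case: y => [y||] //=; rewrite distrC. Qed.

Lemma Dbeta_sym d (X : measurableType d) (Theta : Type)
  (R : realType) (P : Theta -> X -> probability X R) (V : X -> R) (beta : R) th th' :
  Dbeta P V beta th th' = Dbeta P V beta th' th.
Proof.
rewrite /Dbeta; congr ereal_sup; apply/seteqP; split => e [f [x [mf fb ->]]];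
  by exists f, x; split => //; rewrite abseBC.
Qed.

Lemma Dbeta_ge0 d (X : measurableType d) (Theta : Type)
  (R : realType) (P : Theta -> X -> probability X R) (V : X -> R) (beta : R) th th' (x : X) :
  (0 <= Dbeta P V beta th th')%E.
Proof.
apply: ereal_sup_ubound; exists (fun=> 0), x; split.
- exact: measurable_cst.
- by move=> y; rewrite normr0 powR_ge0.
- by rewrite !integral0_eq // subee // abse0 mul0e.
Qed.

Theorem proposition3p2
  (R : realType) (dX dT dO : measure_display)
  (X : measurableType dX) (Theta : measurableType dT)
  (Omega : measurableType dO) (Pr : probability Omega R)
  (pi : probability X R)
  (P : Theta -> X -> probability X R)
  (mubar : probability (X * Theta)%type R)
  (Xs : nat -> Omega -> X) (ths : nat -> Omega -> Theta)
  (V : X -> R)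
  (* setting *)
  (hXcg : countably_generated X)
  (hPx : forall th A, measurable A -> measurable_fun setT (fun x => P th x A))
  (hPth : forall x A, measurable A -> measurable_fun setT (fun th => P th x A))
  (hinv : forall th A, measurable A ->
      (\int[pi]_x (P th x A) = pi A)%E)
  (hXmeas : forall n, measurable_fun setT (Xs n))
  (hthmeas : forall n, measurable_fun setT (ths n))
  (hlaw0 : forall A, measurable A ->
      Pr ((fun w => (Xs 0%N w, ths 0%N w)) @^-1` A) = mubar A)
  (hmarkov : forall (n : nat) (f : X -> R),
      measurable_fun setT f -> (forall x, 0 <= f x) ->
      forall B, nat_filtration Xs ths n B ->
      (\int[Pr]_(w in B) (f (Xs n.+1 w))%:E
        = \int[Pr]_(w in B) \int[P (ths n w) (Xs n w)]_y (f y)%:E)%E)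
  (* Assumption A1 *)
  (hirr : forall th, phi_irreducible (P th))
  (haper : forall th, aperiodic (P th) pi)
  (hVmeas : measurable_fun setT V)
  (hV1 : forall x, 1 <= V x)
  (hVint : (\int[mubar]_z (V z.1)%:E < +oo)%E)
  (hgeo : forall beta : R, 0 < beta <= 1 ->
      exists rho C : R, 0 < rho < 1 /\
        (forall (g : X -> R), measurable_fun setT g ->
           (forall y, `|g y| <= V y `^ beta) ->
           forall th x n,
             (`| kiter (P th) n (fun y => (g y)%:E) x
                 - \int[pi]_y (g y)%:E | <= (C * rho ^+ n * V x `^ beta)%:E)%E))
  (hdrift : exists (b lam : R), 0 < lam < 1 /\
      forall th x, (\int[P th x]_y (V y)%:E <= (lam * V x + b)%:E)%E)
  (* Assumption A2 *)
  (hA2 : exists (eta : R) (gamma : nat -> R),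
      [/\ 0 <= eta < 1/2,
          (forall n, (1 <= n)%N -> 0 < gamma n),
          (forall n, (1 <= n)%N -> gamma n.+1 <= gamma n),
          (exists alpha : R, 1/2 < alpha /\ exists (M : R) (N : nat),
             forall n, (N <= n)%N -> gamma n <= M * n%:R `^ (- alpha))
        & forall beta : R, 0 <= beta <= 1 -> exists C : R,
            forall n, (1 <= n)%N ->
              {ae Pr, forall w,
                (Dbeta P V beta (ths n.-1 w) (ths n w)
                   <= (C * gamma n * V (Xs n w) `^ eta)%:E)%E}]) :
  forall beta : R, 0 <= beta < 1/2 ->
    {ae Pr, forall w,
      (\sum_(1 <= k <oo)
          ((k%:R `^ (- (1/2)))%:E * Dbeta P V beta (ths k w) (ths k.-1 w)
             * (V (Xs k w) `^ beta)%:E) < +oo)%E}.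
Proof.
move=> beta /andP[b0 bhalf].
case: hA2 => eta [gamma [/andP[eta0 etah] gpos gdec [alpha [ahalf [M0 [N Hg]]]] HD]].
have [C HC] : exists C : R, forall n, (1 <= n)%N ->
    {ae Pr, forall w, (Dbeta P V beta (ths n.-1 w) (ths n w)
                   <= (C * gamma n * V (Xs n w) `^ eta)%:E)%E}.
  by apply: HD; apply/andP; split => //; lra.
case: hdrift => b [lam [/andP[l0 l1] Hdr]].
pose b' := Num.max b 0.
have b'0 : 0 <= b' by rewrite /b' le_max lexx orbT.
have bb' : b <= b' by rewrite /b' le_max lexx.
have mVX : forall k, measurable_fun setT (fun w => V (Xs k w)).
  by move=> k; apply: measurableT_comp.
have mVXE : forall k, measurable_fun setT (fun w => (V (Xs k w))%:E).
  by move=> k; apply/measurable_EFinP.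
have V0 : forall x, 0 <= V x by move=> x; apply: le_trans (hV1 x); lra.
have m0fin : (\int[Pr]_w (V (Xs 0 w))%:E < +oo)%E.
  pose phi := fun w => (Xs 0 w, ths 0 w).
  have mphi : measurable_fun setT phi by apply: measurable_fun_pair.
  have mf : measurable_fun setT (fun z : X * Theta => (V z.1)%:E).
    by apply/measurable_EFinP; apply: measurableT_comp => //; exact: measurable_fst.
  have -> : (\int[Pr]_w (V (Xs 0 w))%:E = \int[mubar]_z (V z.1)%:E)%E.
    rewrite [RHS](eq_measure_integral (pushforward Pr phi)); last first.
      by move=> A mA _; exact: (esym (hlaw0 A mA)).
    by rewrite ge0_integral_pushforward //; move=> z _; rewrite lee_fin.
  exact: hVint.
have setTF : forall n, nat_filtration Xs ths n setT.
  move=> n S [[S0 SC SU] _]; rewrite -(setD0 setT); exact: SC.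
pose Mb := Num.max (fine (\int[Pr]_w (V (Xs 0 w))%:E)) (b' / (1 - lam)).
have mkge0 : forall k, (0 <= \int[Pr]_w (V (Xs k w))%:E)%E.
  by move=> k; apply: integral_ge0 => w _; rewrite lee_fin.
have Mbb : b' <= (1 - lam) * Mb.
  rewrite -ler_pdivrMl; last by lra.
  by rewrite mulrC /Mb le_max lexx orbT.
have Mbound : forall k, (\int[Pr]_w (V (Xs k w))%:E <= Mb%:E)%E.
  elim=> [|k IH].
    have f0 : (\int[Pr]_w (V (Xs 0 w))%:E)%E \is a fin_num by rewrite ge0_fin_numE.
    by rewrite -(fineK f0) lee_fin /Mb le_max lexx.
  have fk : (\int[Pr]_w (V (Xs k w))%:E)%E \is a fin_num.
    by rewrite ge0_fin_numE // (le_lt_trans IH) // ltey.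
  rewrite (hmarkov k V hVmeas V0 setT (setTF k)).
  apply: le_trans (@le_integral_nm _ _ _ Pr _ (fun w => ((lam * V (Xs k w) + b')%:E)) _ _) _.
  - by move=> w; apply: integral_ge0 => y _; rewrite lee_fin.
  - move=> w; apply: le_trans (Hdr _ _) _; rewrite lee_fin; lra.
  under eq_integral do rewrite EFinD.
  rewrite ge0_integralD //; last 2 first.
  - by move=> w _; rewrite lee_fin mulr_ge0 //; lra.
  - apply/measurable_EFinP; apply: measurable_funM => //; exact: measurable_cst.
  under eq_integral do rewrite EFinM.
  rewrite ge0_integralZl_EFin //; last by lra.
  have PT : (Pr setT = 1)%E by apply: probability_setT.
  have Ib : (\int[Pr]_x (b'%:E) = b'%:E)%E.
    by rewrite integral_cst // -[RHS]mule1; congr (_ * _)%E; exact: PT.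
  rewrite Ib.
  rewrite -(fineK fk) -EFinM -EFinD lee_fin.
  move: IH; rewrite -(fineK fk) lee_fin => IH.
  have : lam * fine (\int[Pr]_w (V (Xs k w))%:E)%E <= lam * Mb by rewrite ler_wpM2l //; lra.
  lra.
  by move=> x _; rewrite lee_fin.
pose p := eta + beta.
have p1 : p <= 1 by rewrite /p; lra.
pose C' := `|C|.
have C'0 : 0 <= C' by apply: normr_ge0.
pose c k := if (0 < k)%N then k%:R `^ (-(1/2)) * (C' * gamma k) else 0.
have c0 : forall k, 0 <= c k.
  move=> j; rewrite /c; case: j => [|j] //=; apply: mulr_ge0; first exact: powR_ge0.
  by apply: mulr_ge0 => //; apply: ltW; apply: gpos.
pose g k w := ((c k * V (Xs k w) `^ p)%:E)%E.
have g0 : forall k w, (0 <= g k w)%E.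
  by move=> i x; rewrite /g lee_fin mulr_ge0 // powR_ge0.
have mg : forall k, measurable_fun setT (g k).
  move=> i; apply/measurable_EFinP.
  apply: (measurable_funM (measurable_cst _)).
  exact: measurableT_comp (measurable_powR _) (mVX i).
have Mb0 : 0 <= Mb.
  rewrite /Mb le_max; apply/orP; right; apply: divr_ge0 => //; lra.
have Ig : forall k, (\int[Pr]_w g k w <= (c k * Mb)%:E)%E.
  move=> j.
  apply: le_trans (@le_integral_nm _ _ _ Pr _ (fun w => (c j)%:E * (V (Xs j w))%:E)%E (g0 j) _) _.
    move=> w; rewrite /g -EFinM lee_fin ler_wpM2l // ler1_powR //.
  rewrite ge0_integralZl_EFin //; first by rewrite EFinM; apply: lee_wpmul2l; [rewrite lee_fin | exact: Mbound].
  all: try by move=> w _; rewrite lee_fin.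
have Sc : (\sum_(k <oo) (c k * Mb)%:E < +oo)%E.
  apply: (@pseries_fin R (fun k => c k * Mb) (alpha - 1/2) (C' * `|M0| * Mb) (maxn N 1)).
  - lra.
  - by rewrite !mulr_ge0.
  - by move=> j; rewrite mulr_ge0.
  - by rewrite leq_maxr.
  move=> j hk; rewrite /c /=.
  have hNk : (N <= j.+1)%N by apply: leq_trans (leq_maxl N 1) (leqW hk).
  have hg := Hg j.+1 hNk.
  have E : j.+1%:R `^ (- (1 + (alpha - 1/2))) = j.+1%:R `^ (- (1/2)) * j.+1%:R `^ (- alpha) :> R.
    have -> : - (1 + (alpha - 1/2)) = - (1/2) + - alpha :> R by lra.
    by rewrite powRD // pnatr_eq0 implybT.
  rewrite E.
  have A0 : 0 <= j.+1%:R `^ (- (1/2)) :> R by apply: powR_ge0.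
  have B0 : 0 <= j.+1%:R `^ (- alpha) :> R by apply: powR_ge0.
  have hg' : gamma j.+1 <= `|M0| * j.+1%:R `^ (- alpha).
    apply: le_trans hg _; rewrite ler_wpM2r //; exact: ler_norm.
  set A := j.+1%:R `^ (- (1/2)) in A0 *; set B := j.+1%:R `^ (- alpha) in B0 hg' *.
  have h1 : C' * gamma j.+1 <= C' * (`|M0| * B) by rewrite ler_wpM2l.
  have h2 : A * (C' * gamma j.+1) <= A * (C' * (`|M0| * B)) by rewrite ler_wpM2l.
  have h3 : A * (C' * gamma j.+1) * Mb <= A * (C' * (`|M0| * B)) * Mb by rewrite ler_wpM2r.
  apply: le_trans h3 _; rewrite le_eqVlt; apply/orP; left; apply/eqP; ring.
have Int : (\int[Pr]_w (\sum_(k <oo) g k w) < +oo)%E.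
  rewrite integral_nneseries //.
  apply: (le_lt_trans _ Sc); apply: lee_nneseries => //.
  by move=> i _ _; apply: integral_ge0 => w _; exact: g0.
have mS : measurable_fun setT (fun w => \sum_(k <oo) g k w)%E.
  exact: (@ge0_emeasurable_sum _ _ _ setT g xpredT).
have ae1 : {ae Pr, forall w, (\sum_(k <oo) g k w < +oo)%E}.
  have hint : Pr.-integrable setT (fun w => \sum_(k <oo) g k w)%E.
    apply/integrableP; split => //; apply: (le_lt_trans _ Int); rewrite le_eqVlt; apply/orP; left; apply/eqP.
    apply: eq_integral => w _; rewrite gee0_abs //; apply: nneseries_ge0 => n _ _; exact: g0.
  apply: filterS (integrable_ae measurableT hint) => w /(_ I).
  by rewrite ge0_fin_numE //; apply: nneseries_ge0 => n _ _; exact: g0.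
have ae2 : {ae Pr, forall w, forall n, (1 <= n)%N -> (Dbeta P V beta (ths n.-1 w) (ths n w)
                   <= (C * gamma n * V (Xs n w) `^ eta)%:E)%E}.
  apply: ae_foralln => n; case: (leqP 1 n) => hn.
    by apply: filterS (HC n hn) => w H _.
  by apply: aeW => w h.
apply: filterS2 ae1 ae2 => w H1 H2.
apply: le_lt_trans H1.
apply: (@le_trans _ _ (\sum_(1 <= k <oo) g k w)%E).
  apply: lee_nneseries.
    move=> i _ _; apply: mule_ge0; last by rewrite lee_fin powR_ge0.
    apply: mule_ge0; first by rewrite lee_fin powR_ge0.
    exact: (@Dbeta_ge0 _ _ _ _ P V beta _ _ (Xs i w)).
  move=> [|n] _.
    rewrite mulr0n powR0; last by apply/eqP; lra.
    by rewrite !mul0e.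
  have D0 := @Dbeta_ge0 _ _ _ _ P V beta (ths n.+1 w) (ths n w) (Xs n.+1 w).
  have Dle := H2 n.+1 (ltn0Sn n); rewrite /= Dbeta_sym in Dle.
  have Dfin : (Dbeta P V beta (ths n.+1 w) (ths n w)) \is a fin_num.
    by rewrite ge0_fin_numE // (le_lt_trans Dle) // ltey.
  rewrite /= -(fineK Dfin) -!EFinM /g /c /= lee_fin.
  move: Dle D0; rewrite -(fineK Dfin) !lee_fin.
  set dd := fine _ => Dle D0.
  have VV : V (Xs n.+1 w) `^ p = V (Xs n.+1 w) `^ eta * V (Xs n.+1 w) `^ beta.
    rewrite powRD //; apply/implyP => _; apply/eqP => h; have := hV1 (Xs n.+1 w); lra.
  rewrite VV.
  have A0 : 0 <= n.+1%:R `^ (- (1/2)) :> R by apply: powR_ge0.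
  have E0 : 0 <= V (Xs n.+1 w) `^ eta by apply: powR_ge0.
  have W0 : 0 <= V (Xs n.+1 w) `^ beta by apply: powR_ge0.
  have gp : 0 < gamma n.+1 by apply: gpos.
  have h1 : dd <= C' * gamma n.+1 * V (Xs n.+1 w) `^ eta.
    apply: le_trans Dle _; rewrite ler_wpM2r // ler_wpM2r //; [exact: ltW | exact: ler_norm].
  set A := n.+1%:R `^ (- (1/2)) in A0 *.
  set Ve := V (Xs n.+1 w) `^ eta in E0 h1 *.
  set Vb := V (Xs n.+1 w) `^ beta in W0 *.
  have h2 : A * dd <= A * (C' * gamma n.+1 * Ve) by rewrite ler_wpM2l.
  have h3 : A * dd * Vb <= A * (C' * gamma n.+1 * Ve) * Vb by rewrite ler_wpM2r.
  apply: le_trans h3 _; rewrite le_eqVlt; apply/orP; left; apply/eqP; ring.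
rewrite [leRHS](nneseries_split 0 1); last by move=> j _; exact: g0.
rewrite add0n big_nat1; apply: leeDr; exact: g0.
Qed.
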